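(* Let $M,N$ be sharp, integral monoids, $\Gamma$ an $M$-metrised graph, $f:M\to N$ an injective monoid homomorphism with edge contraction $\Gamma'$ of $\Gamma$ along $f$, and $D\in\operatorname{Div}(\Gamma)$. Then $r(f_*(D))=r(D)$.
   Context: Monoids are commutative, sharp (only unit $0$), integral (cancellative), with groupification; $\langle m\rangle=\{km:k\in\mathbb Z\}$ and for $x=km$, $m\ne0$, $x/m:=k$. A graph is $(X,r,i)$, $X$ finite, $r$ idempotent, $i$ an involution, $i(x)=x\iff r(x)=x$; vertices $V$ = fixed points, half-edges $H=X\setminus V$, edges $\{e,i(e)\}$ joining $r(e),r(i(e))$, $H_v=\{e\in H:r(e)=v\}$; graphs are connected. An $M$-metrised graph adds $l:X\to M$ with $l(i(x))=l(x)$, $l(x)=0\iff x\in V$. Divisors: free abelian group on $V$, pointwise order; $\operatorname{Div}^k_+$ = effective divisors of degree $k$. $\operatorname{PL}(\Gamma)=\{g:V\to M^{gp}: g(r(e))-g(r(i(e)))\in\langle l(e)\rangle\ \forall e\in H\}$; $\Delta(g)=\sum_{v}\big(\sum_{e\in H_v}\frac{g(v)-g(r(i(e)))}{l(e)}\big)[v]$; $D\sim D'$ iff $D-D'\in\Delta(\operatorname{PL}(\Gamma))$; $|D|=\{E\ge0:E\sim D\}$; $r(D)=\max\{k\in\mathbb Z:|D-F|\ne\emptyset\ \forall F\in\operatorname{Div}^k_+(\Gamma)\}$. The edge contraction of $\Gamma$ along $f$ is the $N$-metrised graph $\Gamma'$ obtained as the quotient of $X$ by the equivalence relation generated by $e\sim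 r(e)\sim i(e)\sim r(i(e))$ for every $e\in H$ with $f(l(e))=0$, with induced $r,i$ and length $f\circ l$; $\varphi$ is the quotient map and $f_*(D)=\sum_{v}D(v)[\varphi(v)]$. *)

(* Defs.v *)
From HB Require Import structures.
From mathcomp Require Import all_boot all_order all_algebra.
From Stdlib Require Import ClassicalEpsilon.
Set Implicit Arguments. Unset Strict Implicit. Unset Printing Implicit Defensive.
Import Order.TTheory GRing.Theory Num.Theory.
Local Open Scope ring_scope.

(* A sharp integral (commutative) monoid M, presented as a subset of its
   groupification G: M contains 0, is closed under +, is sharp, and
   generates G (every element of G is a difference of elements of M). *)
Definition sharp_integral_monoid (G : zmodType) (M : pred G) : Prop :=
  [/\ (0 : G) \in M,
      (forall x y, x \in M -> y \in M -> x + y \in M),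
      (forall x, x \in M -> - x \in M -> x = 0) &
      (forall g : G, exists a b, [/\ a \in M, b \in M & g = a - b])].

(* A monoid homomorphism M -> N (only its values on M matter). *)
Definition monoid_hom (G H : zmodType) (M : pred G) (N : pred H) (f : G -> H)
  : Prop :=
  [/\ (forall x, x \in M -> f x \in N), f 0 = 0 &
      (forall x y, x \in M -> y \in M -> f (x + y) = f x + f y)].

Record mgraph (G : zmodType) := MGraph {
  mg_X : finType;
  mg_r : mg_X -> mg_X;
  mg_i : mg_X -> mg_X;
  mg_l : mg_X -> G }.

Section Graphs.
Variables (G : zmodType) (Ga : mgraph G).
Local Notation X := (@mg_X G Ga).
Local Notation r := (@mg_r G Ga).
Local Notation i := (@mg_i G Ga).
Local Notation l := (@mg_l G Ga).

Definition is_vertex (x : X) : bool := r x == x.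
Definition is_half_edge (x : X) : bool := r x != x.

Definition adj : rel X :=
  fun u v => [exists e, [&& is_half_edge e, r e == u & r (i e) == v]].

Definition connected_graph : Prop :=
  forall u v, is_vertex u -> is_vertex v -> connect adj u v.

Definition is_metrised_graph (M : pred G) : Prop :=
  (forall x, r (r x) = r x) /\
  (forall x, i (i x) = x) /\
  (forall x, i x = x <-> r x = x) /\
  (forall x, l (i x) = l x) /\
  (forall x, l x = 0 <-> r x = x) /\
  (forall x, l x \in M) /\
  connected_graph.

Definition divisor (D : X -> int) : Prop := forall x, ~~ is_vertex x -> D x = 0.
Definition deg (D : X -> int) : int := \sum_(x : X) D x.
Definition effective (D : X -> int) : Prop := forall x, 0 <= D x.

Definition zquot (x m : G) : int :=
  epsilon (inhabits 0%R) (fun k : int => x = m *~ k).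

(* piecewise linear functions V -> M^gp (= G) *)
Definition PL (g : X -> G) : Prop :=
  forall e, is_half_edge e -> exists k : int, g (r e) - g (r (i e)) = l e *~ k.

Definition Laplacian (g : X -> G) : X -> int :=
  fun x => if is_vertex x then
             \sum_(e : X | (r e == x) && is_half_edge e) zquot (g x - g (r (i e))) (l e)
           else 0.

Definition lin_equiv (D D' : X -> int) : Prop :=
  exists g, PL g /\ forall x, D x - D' x = Laplacian g x.

Definition linsys_nonempty (D : X -> int) : Prop :=
  exists E, [/\ divisor E, effective E & lin_equiv E D].

Definition rank_cond (D : X -> int) (k : int) : Prop :=
  forall F, divisor F -> effective F -> deg F = k ->
    linsys_nonempty (fun x => D x - F x).

Definition is_rank (D : X -> int) (k : int) : Prop :=
  rank_cond D k /\ forall k', rank_cond D k' -> k' <= k.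

Definition rank (D : X -> int) : int := epsilon (inhabits 0%R) (is_rank D).

End Graphs.

Section Contraction.
Variables (G H : zmodType) (Ga : mgraph G) (Gb : mgraph H) (f : G -> H).
Local Notation X := (@mg_X G Ga).
Local Notation r := (@mg_r G Ga).
Local Notation i := (@mg_i G Ga).
Local Notation l := (@mg_l G Ga).

Definition contr_rel : rel X :=
  fun x y => [exists e, [&& is_half_edge e, f (l e) == 0,
                  x \in [:: e; r e; i e; r (i e)] &
                  y \in [:: e; r e; i e; r (i e)]]].

(* Gb, with quotient map phi, is the edge contraction of Ga along f:
   phi is the quotient map of X by the equivalence relation generated by
   contr_rel (connect of a symmetric relation), with induced r, i and
   length f o l. *)
Definition is_edge_contraction (phi : X -> mg_X Gb) : Prop :=
  (forall y, exists x, phi x = y) /\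
  (forall x y, phi x = phi y <-> connect contr_rel x y) /\
  (forall x, phi (r x) = @mg_r H Gb (phi x)) /\
  (forall x, phi (i x) = @mg_i H Gb (phi x)) /\
  (forall x, @mg_l H Gb (phi x) = f (l x)).

Definition pushforward (phi : X -> mg_X Gb) (D : X -> int) : mg_X Gb -> int :=
  fun y => \sum_(x : X | is_vertex x && (phi x == y)) D x.

End Contraction.

(* Main.v *)
Require Import Defs.
From mathcomp Require Import all_boot all_order all_algebra.
From Stdlib Require Import ClassicalEpsilon FunctionalExtensionality PropExtensionality Classical.
Set Implicit Arguments. Unset Strict Implicit. Unset Printing Implicit Defensive.
Import Order.TTheory GRing.Theory Num.Theory.
Local Open Scope ring_scope.

Lemma mulrn_inM (G : zmodType) (M : pred G) m n :
  sharp_integral_monoid M -> m \in M -> m *+ n \in M.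
Proof.
case=> h0 hD _ _ hm; elim: n => [|n IH]; first by rewrite mulr0n.
by rewrite mulrS hD.
Qed.

Lemma torsion_free (G : zmodType) (M : pred G) m n :
  sharp_integral_monoid M -> m \in M -> m != 0 -> m *~ n = 0 -> n = 0.
Proof.
move=> hM hm m0.
have key : forall k : nat, m *+ k.+1 = 0 -> False.
  move=> k hk; case: (hM) => _ _ hs _.
  have e : - m = m *+ k by apply/eqP; rewrite eq_sym -addr_eq0 -mulrSr hk.
  by move/eqP: m0; apply; apply: hs => //; rewrite e mulrn_inM.
case: n => [[|k]|k] //=.
- by move=> /key.
- by rewrite NegzE mulrNz => /eqP; rewrite oppr_eq0 => /eqP /key.
Qed.

Lemma zquot_eq (G : zmodType) (M : pred G) (m x : G) (k : int) :
  sharp_integral_monoid M -> m \in M -> m != 0 -> x = m *~ k -> zquot x m = k.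
Proof.
move=> hM hm m0 hx; rewrite /zquot.
have ex : exists k0 : int, x = m *~ k0 by exists k.
have := epsilon_spec (inhabits 0%R) _ ex.
set k0 := epsilon _ _ => e.
have : m *~ (k0 - k) = 0 by rewrite mulrzBr -e -hx subrr.
by move/(torsion_free hM hm m0)/eqP; rewrite subr_eq0 => /eqP.
Qed.

Section Ext.
Variables (G H : zmodType) (M : pred G) (N : pred H) (f : G -> H).
Hypotheses (hM : sharp_integral_monoid M) (hf : monoid_hom M N f)
  (finj : {in M &, injective f}).

Definition repG (x : G) : G * G :=
  epsilon (inhabits (0, 0)) (fun p => [/\ p.1 \in M, p.2 \in M & x = p.1 - p.2]).

Lemma repG_spec x : [/\ (repG x).1 \in M, (repG x).2 \in M & x = (repG x).1 - (repG x).2].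
Proof.
apply: (epsilon_spec (inhabits (0, 0)) (fun p : G * G => [/\ p.1 \in M, p.2 \in M & x = p.1 - p.2])).
case: hM => _ _ _ /(_ x) [a [b [ha hb e]]]; by exists (a, b).
Qed.

Definition fG (x : G) : H := f (repG x).1 - f (repG x).2.

Lemma fG_rep x a b : a \in M -> b \in M -> x = a - b -> fG x = f a - f b.
Proof.
move=> ha hb e; rewrite /fG; case: (repG_spec x) => h1 h2 e'.
case: hf => _ _ hadd; case: hM => _ hD _ _.
set p1 := (repG x).1 in h1 e' *; set p2 := (repG x).2 in h2 e' *.
have : p1 + b = a + p2.
  by rewrite -[p1](subrK p2) -e' e addrAC subrK.
move=> /(congr1 f); rewrite !hadd // => e2.
by rewrite -(addrK (f b) (f p1)) e2 addrAC addrK.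
Qed.

Lemma fG_M m : m \in M -> fG m = f m.
Proof.
move=> hm; case: (hM) => h0 _ _ _; case: hf => _ f0 _.
by rewrite (fG_rep hm h0 (esym (subr0 m))) f0 subr0.
Qed.

Lemma fGD x y : fG (x + y) = fG x + fG y.
Proof.
case: (repG_spec x) => ha hb ex; case: (repG_spec y) => hc hd ey.
case: hf => _ _ hadd; case: hM => _ hD _ _.
rewrite (fG_rep (hD _ _ ha hc) (hD _ _ hb hd) (_ : _ = _ - _)); last first.
  by rewrite {1}ex {1}ey opprD addrACA.
rewrite !hadd // /fG opprD addrACA //.
Qed.

Lemma fG0 : fG 0 = 0.
Proof. by case: (hM) => h0 _ _ _; rewrite (fG_rep h0 h0 (esym (subrr 0))) subrr. Qed.

Lemma fGN x : fG (- x) = - fG x.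
Proof. by apply/eqP; rewrite -subr_eq0 opprK -fGD addrC subrr fG0. Qed.

Lemma fGz x k : fG (x *~ k) = fG x *~ k.
Proof.
have hn : forall n : nat, fG (x *+ n) = fG x *+ n.
  by elim=> [|n IH]; rewrite ?mulr0n ?fG0 // !mulrS fGD IH.
case: k => n; first by rewrite /= hn.
by rewrite NegzE !mulrNz fGN -!pmulrn hn.
Qed.

Lemma fG_inj x y : fG x = fG y -> x = y.
Proof.
move=> e; have : fG (x - y) = 0 by rewrite fGD fGN e subrr.
case: (repG_spec (x - y)) => ha hb exy.
rewrite (fG_rep ha hb exy) => /eqP; rewrite subr_eq0 => /eqP e3.
by apply/eqP; rewrite -subr_eq0 exy (finj ha hb e3) subrr.
Qed.

End Ext.

Section Graph.
Variables (G H : zmodType) (M : pred G) (N : pred H) (f : G -> H)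
  (Ga : mgraph G) (Gb : mgraph H) (phi : mg_X Ga -> mg_X Gb).
Hypotheses (hM : sharp_integral_monoid M) (hN : sharp_integral_monoid N)
  (hGa : is_metrised_graph Ga M) (hf : monoid_hom M N f)
  (finj : {in M &, injective f}) (hc : is_edge_contraction f phi).

Local Notation Xa := (mg_X Ga).
Local Notation Xb := (mg_X Gb).
Local Notation ra := (@mg_r G Ga).
Local Notation ia := (@mg_i G Ga).
Local Notation la := (@mg_l G Ga).
Local Notation rb := (@mg_r H Gb).
Local Notation ib := (@mg_i H Gb).
Local Notation lb := (@mg_l H Gb).

Lemma la_M e : la e \in M.
Proof. by case: hGa => _ [_ [_ [_ [_ [h _]]]]]. Qed.

Lemma la_neq0 e : is_half_edge e -> la e != 0.
Proof.
rewrite /is_half_edge => he; apply/eqP => /(proj1 (proj1 (proj2 (proj2 (proj2 (proj2 hGa)))) e)).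
by move/eqP: he.
Qed.

Lemma fla_neq0 e : is_half_edge e -> f (la e) != 0.
Proof.
move=> he; apply/eqP => e0; move/eqP: (la_neq0 he); apply.
case: hM => h0 _ _ _; case: hf => _ f0 _.
by apply: finj; rewrite ?la_M // e0 f0.
Qed.

Lemma fla_N e : f (la e) \in N.
Proof. by case: hf => h _ _; apply: h; apply: la_M. Qed.

Lemma ra_idem x : ra (ra x) = ra x.
Proof. by case: hGa. Qed.

Lemma contr_false (x y : Xa) : contr_rel f x y = false.
Proof.
case: (boolP (contr_rel f x y)) => // /existsP [e /and4P [he /eqP fe _ _]].
by move: (fla_neq0 he); rewrite fe eqxx.
Qed.

Lemma phi_inj : injective phi.
Proof.
move=> x y /(proj1 (proj1 (proj2 hc) x y)) /connectP [[|z p]] /=.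
  by move=> _ ->.
by rewrite contr_false.
Qed.

Lemma phi_surjb y : exists x, phi x == y.
Proof. by case: (proj1 hc y) => x <-; exists x. Qed.

Definition psi (y : Xb) : Xa := xchoose (phi_surjb y).

Lemma psiK y : phi (psi y) = y.
Proof. exact/eqP/(xchooseP (phi_surjb y)). Qed.

Lemma phiK x : psi (phi x) = x.
Proof. by apply: phi_inj; rewrite psiK. Qed.

Lemma rb_phi x : rb (phi x) = phi (ra x).
Proof. by case: hc => _ [_ [h _]]; rewrite h. Qed.

Lemma ib_phi x : ib (phi x) = phi (ia x).
Proof. by case: hc => _ [_ [_ [h _]]]; rewrite h. Qed.

Lemma lb_phi x : lb (phi x) = f (la x).
Proof. by case: hc => _ [_ [_ [_ h]]]; rewrite h. Qed.

Lemma vert_phi x : is_vertex (phi x) = is_vertex x.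
Proof. by rewrite /is_vertex rb_phi (inj_eq phi_inj). Qed.

Lemma half_phi x : is_half_edge (phi x) = is_half_edge x.
Proof. by rewrite /is_half_edge rb_phi (inj_eq phi_inj). Qed.

Lemma phi_bij : bijective phi.
Proof. by exists psi; [exact: phiK | exact: psiK]. Qed.

Lemma sum_phi (P : pred Xb) (F : Xb -> int) :
  \sum_(y | P y) F y = \sum_(x | P (phi x)) F (phi x).
Proof. by apply: reindex; apply: onW_bij; apply: phi_bij. Qed.

Lemma lap_transfer (g : Xa -> G) (g' : Xb -> H) :
  (forall e, is_half_edge e -> exists k, g (ra e) - g (ra (ia e)) = la e *~ k /\
      g' (phi (ra e)) - g' (phi (ra (ia e))) = f (la e) *~ k) ->
  forall x, Laplacian g' (phi x) = Laplacian g x.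
Proof.
move=> hk x; rewrite /Laplacian vert_phi; case: ifP => // vx.
rewrite sum_phi; apply: eq_big => e.
  by rewrite rb_phi (inj_eq phi_inj) half_phi.
rewrite rb_phi (inj_eq phi_inj) half_phi => /andP [/eqP <- he]; rewrite ib_phi !rb_phi lb_phi.
case: (hk e he) => k [e1 e2].
rewrite (zquot_eq hM (la_M e) (la_neq0 he) e1).
by rewrite (zquot_eq hN (fla_N e) (fla_neq0 he) e2).
Qed.


Local Notation F := (fG M f).

Lemma fGB x y : F (x - y) = F x - F y.
Proof. by rewrite (fGD hM hf) (fGN hM hf). Qed.

Lemma fG_lz e k : F (la e *~ k) = f (la e) *~ k.
Proof. by rewrite (fGz hM hf) (fG_M hM hf (la_M e)). Qed.

Lemma sum_phiT (Fn : Xb -> int) : \sum_(y : Xb) Fn y = \sum_(x : Xa) Fn (phi x).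
Proof. by apply: reindex; apply: onW_bij; apply: phi_bij. Qed.

Lemma linAB (E1 E2 : Xb -> int) :
  lin_equiv (fun x => E1 (phi x)) (fun x => E2 (phi x)) -> lin_equiv E1 E2.
Proof.
case=> g [PLg hg].
have key : forall e, is_half_edge e -> exists k, g (ra e) - g (ra (ia e)) = la e *~ k /\
    (fun y => F (g (psi y))) (phi (ra e)) - (fun y => F (g (psi y))) (phi (ra (ia e)))
      = f (la e) *~ k.
  move=> e he; case: (PLg e he) => k ek; exists k; split => //=.
  by rewrite !phiK -fGB ek fG_lz.
exists (fun y => F (g (psi y))); split.
  move=> y; rewrite -(psiK y) half_phi => hy.
  case: (key _ hy) => k [_ e2]; exists k; by rewrite rb_phi ib_phi rb_phi lb_phi.
move=> y; rewrite -(psiK y) (@lap_transfer g (fun y => F (g (psi y))) key); exact: hg.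
Qed.

Lemma linBA (E1 E2 : Xb -> int) :
  lin_equiv E1 E2 -> lin_equiv (fun x => E1 (phi x)) (fun x => E2 (phi x)).
Proof.
case=> g' [PLg' hg'].
suff [g key] : exists g : Xa -> G, forall e, is_half_edge e -> exists k,
    g (ra e) - g (ra (ia e)) = la e *~ k /\
    g' (phi (ra e)) - g' (phi (ra (ia e))) = f (la e) *~ k.
  exists g; split.
    by move=> e /key [k [e1 _]]; exists k.
  by move=> x /=; rewrite -(lap_transfer key); apply: hg'.
have PLb : forall e, is_half_edge e ->
    exists k, g' (phi (ra e)) - g' (phi (ra (ia e))) = f (la e) *~ k.
  move=> e he; have := PLg' (phi e); rewrite half_phi => /(_ he) [k].
  by rewrite rb_phi ib_phi rb_phi lb_phi => ek; exists k.
case: (classic (exists v : Xa, is_vertex v)) => [[v0 hv0]|nov]; last first.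
  exists (fun _ => 0) => e he; exfalso; apply: nov; exists (ra e).
  by rewrite /is_vertex ra_idem.
have step : forall (p : seq Xa) (u : Xa), path (@adj G Ga) u p ->
    (exists z, g' (phi u) - g' (phi v0) = F z) ->
    exists z, g' (phi (last u p)) - g' (phi v0) = F z.
  elim=> [|w p IH] u //=.
  move=> /andP [a pth] [z ez]; apply: (IH w pth).
  case/existsP: a => e /and3P [he /eqP reu /eqP riew].
  case: (PLb e he) => k ek.
  exists (z - la e *~ k); rewrite fGB fG_lz -ez -ek reu riew.
  by rewrite opprB [RHS]addrC addrA subrK.
have S : forall v, is_vertex v -> exists z, g' (phi v) - g' (phi v0) = F z.
  move=> v hv.
  have := (proj2 (proj2 (proj2 (proj2 (proj2 (proj2 hGa)))))) v0 v hv0 hv.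
  move=> /connectP [p pth ->]; apply: step => //.
  by exists 0; rewrite subrr (fG0 hM hf).
pose g x := epsilon (inhabits 0) (fun z => F z = g' (phi x) - g' (phi v0)).
have gs : forall v, is_vertex v -> F (g v) = g' (phi v) - g' (phi v0).
  move=> v /S [z ez]; rewrite /g; apply: (epsilon_spec (inhabits (0:G)) (fun z => F z = g' (phi v) - g' (phi v0))); exists z; by rewrite ez.
exists g => e he; case: (PLb e he) => k ek; exists k; split => //.
apply: (fG_inj hM hf finj); rewrite fGB fG_lz !gs -?ek.
- by rewrite opprB addrA subrK.
- by rewrite /is_vertex ra_idem.
- by rewrite /is_vertex ra_idem.
Qed.

Lemma linsys_ext (D1 D2 : Xa -> int) :
  (forall x, D1 x = D2 x) -> linsys_nonempty D1 -> linsys_nonempty D2.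
Proof. by move=> e; have -> : D1 = D2 by apply: functional_extensionality. Qed.

Lemma linsys_BA E : linsys_nonempty E -> linsys_nonempty (fun x => E (phi x)).
Proof.
case=> Eb [dv ef le]; exists (fun x => Eb (phi x)); split.
- by move=> x hx; apply: dv; rewrite vert_phi.
- by move=> x.
- exact: linBA.
Qed.

Lemma linsys_AB E : linsys_nonempty (fun x => E (phi x)) -> linsys_nonempty E.
Proof.
case=> Ea [dv ef le]; exists (fun y => Ea (psi y)); split.
- by move=> y; rewrite -(psiK y) vert_phi phiK; exact: dv.
- by move=> y.
- apply: linAB.
  have -> : (fun x => Ea (psi (phi x))) = Ea.
    by apply: functional_extensionality => x; rewrite phiK.
  exact: le.
Qed.

Lemma push_phi D : divisor D -> forall x, pushforward phi D (phi x) = D x.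
Proof.
move=> dD x; rewrite /pushforward.
rewrite (eq_bigl (fun x' => is_vertex x' && (x' == x))); last first.
  by move=> x'; rewrite (inj_eq phi_inj).
case: (boolP (is_vertex x)) => vx.
  rewrite (eq_bigl (fun x' => x' == x)) ?big_pred1_eq //.
  by move=> x' /=; case: (x' =P x) => [->|_]; rewrite ?vx ?andbF.
rewrite big_pred0 ?dD //.
by move=> x' /=; case: (x' =P x) => [->|_]; rewrite ?(negbTE vx) ?andbF.
Qed.

Lemma rc_iff D k : divisor D ->
  (rank_cond (pushforward phi D) k <-> rank_cond D k).
Proof.
move=> dD; split.
- move=> h Fa dF eF degF.
  have hb : linsys_nonempty (fun y => pushforward phi D y - Fa (psi y)).
    apply: h.
    + by move=> y; rewrite -(psiK y) vert_phi phiK; exact: dF.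
    + by move=> y.
    + by rewrite /deg sum_phiT; under eq_bigr do rewrite phiK.
  apply: (linsys_ext _ (linsys_BA hb)) => x /=.
  by rewrite push_phi // phiK.
- move=> h Fb dF eF degF; apply: linsys_AB.
  apply: (linsys_ext _ (h (fun x => Fb (phi x)) _ _ _)).
  + by move=> x /=; rewrite push_phi.
  + by move=> x hx; apply: dF; rewrite vert_phi.
  + by move=> x.
  + by rewrite -degF /deg sum_phiT.
Qed.

Lemma is_rank_eq D : divisor D -> is_rank (pushforward phi D) = is_rank D.
Proof.
move=> dD; apply: functional_extensionality => k.
apply: propositional_extensionality; rewrite /is_rank.
split=> [[h1 h2]|[h1 h2]]; split.
- by apply/(rc_iff k dD).
- by move=> k' hk'; apply: h2; apply/(rc_iff k' dD).
- by apply/(rc_iff k dD).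
- by move=> k' hk'; apply: h2; apply/(rc_iff k' dD).
Qed.
End Graph.

Theorem mainTheorem10 (G H : zmodType) (M : pred G) (N : pred H)
    (Ga : mgraph G) (Gb : mgraph H) (f : G -> H)
    (phi : mg_X Ga -> mg_X Gb) (D : mg_X Ga -> int) :
  sharp_integral_monoid M -> sharp_integral_monoid N ->
  is_metrised_graph Ga M ->
  monoid_hom M N f -> {in M &, injective f} ->
  is_edge_contraction f phi -> is_metrised_graph Gb N ->
  divisor D ->
  rank (pushforward phi D) = rank D.
Proof.
move=> hM hN hGa hf finj hc _ dD.
by rewrite /rank (is_rank_eq hM hN hGa hf finj hc dD).
Qed.
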